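(* Let $n\ge2$, $m\ge1$, $q=2^m$, and let $\mathbf{H}_X^{(q)}$, $\mathbf{H}_Z^{(q)}$ be $q$-ary labelings of the toric Tanner graphs $\mathcal{G}_X$, $\mathcal{G}_Z$ (as in the context) with codes $\mathcal{C}_X^{(q)}$, $\mathcal{C}_Z^{(q)}$, such that every cycle of the labeled graph $\mathcal{G}_X$ has product $1$ and $(\mathcal{C}_Z^{(q)})^\perp\subset\mathcal{C}_X^{(q)}$. Then the minimum distance of the extended toric code $(\hat{\mathcal{C}}_X,\hat{\mathcal{C}}_Z)$, namely $\min\{\min\{|x|:x\in\hat{\mathcal{C}}_X\setminus\hat{\mathcal{C}}_Z^\perp\},\ \min\{|x|:x\in\hat{\mathcal{C}}_Z\setminus\hat{\mathcal{C}}_X^\perp\}\}$ (Hamming weights), is at least $n$.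
   Context: Indices are taken in $\mathbb{Z}_{2n}=\{0,\dots,2n-1\}$ with arithmetic mod $2n$. Variable nodes: $V=\{(i,j)\in\mathbb{Z}_{2n}^2: i+j\text{ even}\}$ ($2n^2$ nodes). $X$-checks: $C_X=\{(i,j): i\text{ odd}, j\text{ even}\}$; $Z$-checks: $C_Z=\{(i,j): i\text{ even}, j\text{ odd}\}$. Each check $(i,j)$ is adjacent to the variable nodes $(i\pm1,j)$, $(i,j\pm1)$; $\mathcal{G}_X$, $\mathcal{G}_Z$ are the bipartite graphs on $V\cup C_X$, $V\cup C_Z$. A $q$-ary labeling is $\mathbf{H}_X^{(q)}=(x_{c,v})\in\mathbb{F}_q^{C_X\times V}$ with $x_{c,v}\ne0$ iff $c,v$ adjacent, similarly $\mathbf{H}_Z^{(q)}\in\mathbb{F}_q^{C_Z\times V}$; $\mathcal{C}_X^{(q)}=\ker\mathbf{H}_X^{(q)}$, $\mathcal{C}_Z^{(q)}=\ker\mathbf{H}_Z^{(q)}$, $\perp$ w.r.t. the standard bilinear form. For a cycle $v_1,c_1,\dots,v_k,c_k,v_1$ of labeled $\mathcal{G}_X$ its product is $\prod_t x_{c_t v_{t+1}}x_{c_t v_t}^{-1}$. Extended toric code: fix an $\mathbb{F}_2$-basis of $\mathbb{F}_{2^m}$ and let $A:\mathbb{F}_{2^m}\to\mathbb{F}_2^{m\times m}$ send $a$ to the matrix of multiplication by $a$ in that basis. $\hat{\mathbf{H}}_X$ is obtained from $\mathbf{H}_X^{(q)}$ by replacing each entry $h$ by the block $A(h)$, and $\hat{\mathbf{H}}_Z$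 from $\mathbf{H}_Z^{(q)}$ by replacing each entry $h$ by $A(h)^T$ (zero entries become zero blocks); then $\hat{\mathbf{H}}_X\hat{\mathbf{H}}_Z^T=0$. $\hat{\mathcal{C}}_X=\ker\hat{\mathbf{H}}_X$, $\hat{\mathcal{C}}_Z=\ker\hat{\mathbf{H}}_Z\subset\mathbb{F}_2^{2mn^2}$, with $\perp$ the standard binary dual. *)

(* Defs.v *)
From HB Require Import structures.
From mathcomp Require Import all_boot all_order all_algebra all_field.
Set Implicit Arguments. Unset Strict Implicit. Unset Printing Implicit Defensive.
Import GRing.Theory.
Local Open Scope ring_scope.

(* Positions of the 2n x 2n torus Z_{2n}^2; 'I_(2n) with arithmetic mod 2n. *)
Definition pos (n : nat) := ('I_(2 * n) * 'I_(2 * n))%type.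

Definition isVar n (p : pos n) : bool := ~~ odd (p.1 + p.2)%N.
Definition isCX n (p : pos n) : bool := odd p.1 && ~~ odd p.2.
Definition isCZ n (p : pos n) : bool := ~~ odd p.1 && odd p.2.

Definition VN n := {p : pos n | isVar p}.
Definition CX n := {p : pos n | isCX p}.
Definition CZ n := {p : pos n | isCZ p}.

Definition adj n (c v : pos n) : bool :=
  let N := (2 * n)%N in
  [|| ((v.1 : nat) == (c.1 + 1) %% N)%N && ((v.2 : nat) == c.2),
      ((v.1 : nat) == (c.1 + N - 1) %% N)%N && ((v.2 : nat) == c.2),
      ((v.1 : nat) == c.1) && ((v.2 : nat) == (c.2 + 1) %% N)%N |
      ((v.1 : nat) == c.1) && ((v.2 : nat) == (c.2 + N - 1) %% N)%N].

Definition labeling n (F : fieldType) (P : pos n -> bool)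
    (H : {p : pos n | P p} -> VN n -> F) : Prop :=
  forall c v, (H c v != 0) = adj (val c) (val v).

Definition cycles_product_one n (F : fieldType) (H : CX n -> VN n -> F) : Prop :=
  forall (k : nat) (vs : 'I_k -> VN n) (cs : 'I_k -> CX n),
    (2 <= k)%N -> injective vs -> injective cs ->
    (forall t, adj (val (cs t)) (val (vs t)) && adj (val (cs t)) (val (vs (ordS t)))) ->
    \prod_(t < k) (H (cs t) (vs (ordS t)) / H (cs t) (vs t)) = 1.

Definition in_code (R : comRingType) (C V : finType) (H : C -> V -> R) (x : V -> R) : Prop :=
  forall c, \sum_v H c v * x v = 0.

Definition dual (R : comRingType) (V : finType) (P : (V -> R) -> Prop) (y : V -> R) : Prop :=
  forall x, P x -> \sum_v x v * y v = 0.

Definition wt (R : ringType) (V : finType) (x : V -> R) : nat := #|[pred v | x v != 0]|.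

Definition f2 (F : fieldType) (a : 'F_2) : F := (nat_of_ord a)%:R.

Definition is_F2_basis (F : fieldType) m (b : 'I_m -> F) : Prop :=
  bijective (fun l : {ffun 'I_m -> 'F_2} => \sum_(i < m) f2 F (l i) * b i).

Definition mult_matrix (F : fieldType) m (b : 'I_m -> F) (A : F -> 'M['F_2]_m) : Prop :=
  forall a j, a * b j = \sum_(i < m) f2 F (A a i j) * b i.

(* binary parity-check matrices of the extended code: block (c,v) = A(x_{c,v}),
   resp. A(x_{c,v})^T *)
Definition extX n (F : fieldType) m (A : F -> 'M['F_2]_m) (H : CX n -> VN n -> F)
  : (CX n * 'I_m) -> (VN n * 'I_m) -> 'F_2 :=
  fun cr vs => A (H cr.1 vs.1) cr.2 vs.2.
Definition extZ n (F : fieldType) m (A : F -> 'M['F_2]_m) (H : CZ n -> VN n -> F)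
  : (CZ n * 'I_m) -> (VN n * 'I_m) -> 'F_2 :=
  fun cr vs => A (H cr.1 vs.1) vs.2 cr.2.

(* Main.v *)
Require Import Defs.
From HB Require Import structures.
From mathcomp Require Import all_boot all_order all_algebra all_field zify.
Import GRing.Theory.

Set Implicit Arguments. Unset Strict Implicit.

Section Geo.
Variable n : nat.
Hypothesis n2 : (2 <= n)%N.
Local Notation N := (2 * n)%N.

Lemma N0 : (0 < N)%N. Proof. lia. Qed.

Definition md (i : nat) : 'I_N := Ordinal (ltn_pmod i N0).
Definition pt (i j : nat) : pos n := (md i, md j).

Lemma modN2 y : (y < 2 * N)%N -> y %% N = if (y < N)%N then y else (y - N)%N.
Proof.
move=> h; case: ifP => h2; first by rewrite modn_small.
have -> : y = ((y - N) + N)%N by lia.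
rewrite modnDr modn_small; lia.
Qed.

Lemma pt_eqE (v : pos n) i j :
  (v == pt i j) = ((v.1 : nat) == i %% N)%N && ((v.2 : nat) == j %% N)%N.
Proof. by case: v => a b; rewrite /pt xpair_eqE. Qed.

Lemma pt_val (v : pos n) : pt v.1 v.2 = v.
Proof. by case: v => a b; rewrite /pt; congr pair; apply: val_inj; rewrite /= modn_small. Qed.

Lemma odd_md i : odd (md i) = odd i.
Proof. by rewrite /= odd_mod // oddM. Qed.

Lemma adjE (c v : pos n) : adj c v =
  [|| v == pt (c.1 + 1) c.2, v == pt (c.1 + N - 1) c.2,
      v == pt c.1 (c.2 + 1) | v == pt c.1 (c.2 + N - 1)].
Proof.
rewrite /adj !pt_eqE !(modn_small (ltn_ord c.1)) !(modn_small (ltn_ord c.2)) //.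
Qed.

Lemma keyN a c : (a < N)%N -> (c < N)%N ->
  (a == (c + 1) %% N) = (c == (a + N - 1) %% N).
Proof.
move=> ha hc; rewrite !modN2; try lia.
case: ifP => h1; case: ifP => h2; apply/eqP/eqP; lia.
Qed.

Lemma adjC (c v : pos n) : adj c v = adj v c.
Proof.
case: c => [[a ha] [b hb]]; case: v => [[c hc] [d hd]].
rewrite /adj /= !keyN //.
rewrite [b == d]eq_sym [a == c]eq_sym.
by case: (c == a); case: (d == b); case: (a == _ %% _); case: (c == _ %% _);
  case: (b == _ %% _); case: (d == _ %% _).
Qed.

Lemma md_mod i : md (i %% N) = md i.
Proof. by apply: val_inj; rewrite /= modn_mod. Qed.
Lemma md_val (a : 'I_N) : md a = a.
Proof. by apply: val_inj; rewrite /= modn_small. Qed.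
Lemma mdDml a b : md (a %% N + b) = md (a + b).
Proof. by apply: val_inj; rewrite /= modnDml. Qed.
Lemma mdNm1 x : 0 < x -> md (x %% N + N - 1) = md (x - 1).
Proof.
move=> hx; apply: val_inj => /=.
rewrite -addnBA; last by lia.
rewrite modnDml.
have -> : x + (N - 1) = (x - 1) + N by lia.
by rewrite modnDr.
Qed.
Lemma md_eq a b : a = b -> md a = md b. Proof. by move->. Qed.

Lemma isVar_pt i j : isVar (pt i j) = ~~ odd (i + j).
Proof. by rewrite /isVar /= oddD !odd_md oddD. Qed.
Lemma isCX_pt i j : isCX (pt i j) = odd i && ~~ odd j.
Proof. by rewrite /isCX /= !odd_md. Qed.
Lemma isCZ_pt i j : isCZ (pt i j) = ~~ odd i && odd j.
Proof. by rewrite /isCZ /= !odd_md. Qed.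

Lemma adj_up i j : adj (pt i j) (pt i (j + 1)).
Proof.
rewrite adjE; apply/or4P; apply: Or43; rewrite pt_eqE /=.
by rewrite !modn_mod modnDml !eqxx.
Qed.
Lemma adj_right i j : adj (pt i j) (pt (i + 1) j).
Proof.
rewrite adjE; apply/or4P; apply: Or41; rewrite pt_eqE /=.
by rewrite !modn_mod modnDml !eqxx.
Qed.
Lemma adj_down i j : 0 < j -> adj (pt i j) (pt i (j - 1)).
Proof.
move=> hj; rewrite adjE; apply/or4P; apply: Or44; rewrite pt_eqE /=.
rewrite modn_mod eqxx /=; apply/eqP.
have /(congr1 val) /= -> := mdNm1 hj; by [].
Qed.
Lemma adj_left i j : 0 < i -> adj (pt i j) (pt (i - 1) j).
Proof.
move=> hj; rewrite adjE; apply/or4P; apply: Or42; rewrite pt_eqE /=.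
rewrite modn_mod eqxx andbT; apply/eqP.
have /(congr1 val) /= -> := mdNm1 hj; by [].
Qed.

Lemma ptml i j : pt (i %% N) j = pt i j.
Proof. by rewrite /pt md_mod. Qed.
Lemma ptmr i j : pt i (j %% N) = pt i j.
Proof. by rewrite /pt md_mod. Qed.
Lemma oddmN x : odd (x %% N) = odd x.
Proof. by rewrite odd_mod // oddM. Qed.

End Geo.

Section Core.
Variable n : nat.
Hypothesis n2 : (2 <= n)%N.
Local Notation N := (2 * n)%N.
Local Notation pt := (@pt n n2).
Local Notation md := (@md n n2).

Variable F : fieldType.
Variables X Z : pos n -> pos n -> F.
Variable y : pos n -> F.
Hypothesis labX : forall c v, isCX c -> isVar v -> (X c v != 0)%R = adj c v.
Hypothesis labZ : forall p v, isCZ p -> isVar v -> (Z p v != 0)%R = adj p v.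
Hypothesis orth : forall c p, isCX c -> isCZ p ->
  (\sum_(v | isVar v) X c v * Z p v = 0)%R.
Hypothesis cyc : forall c, isCX c -> (\sum_(v | isVar v) X c v * y v = 0)%R.

Definition Rs (lam : pos n -> F) v := (\sum_(p | isCZ p) lam p * Z p v - y v)%R.

Lemma VL lam c : isCX c -> (\sum_(v | isVar v) X c v * Rs lam v = 0)%R.
Proof.
move=> hc; rewrite /Rs.
under eq_bigr => v _ do rewrite GRing.mulrBr GRing.mulr_sumr.
rewrite GRing.sumrB cyc // GRing.subr0 exchange_big /=.
apply: big1 => p hp.
under eq_bigr => v _ do rewrite GRing.mulrCA.
by rewrite -GRing.mulr_sumr orth // GRing.mulr0.
Qed.

Lemma ZP lam c t : isCX c -> isVar t -> adj c t ->
  (forall v, isVar v -> adj c v -> v != t -> Rs lam v = 0%R) -> Rs lam t = 0%R.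
Proof.
move=> hc ht hct H.
have := VL lam hc; rewrite (bigD1 t) //= big1 ?GRing.addr0.
  move/eqP; rewrite GRing.mulf_eq0 => /orP[|/eqP //].
  by rewrite -[X c t == 0%R]negbK labX // hct.
move=> v /andP[hv hvt]; case: (boolP (adj c v)) => a.
  by rewrite H // GRing.mulr0.
have : X c v == 0%R by rewrite -[X c v == 0%R]negbK labX.
by move/eqP->; rewrite GRing.mul0r.
Qed.

Lemma Z0 p v : isCZ p -> isVar v -> ~~ adj p v -> Z p v = 0%R.
Proof. by move=> hp hv a; apply/eqP; rewrite -[_ == _]negbK labZ. Qed.

Lemma PSe (f : pos n -> F) v : isVar v -> ~~ odd v.1 ->
  (\sum_(p | isCZ p) f p * Z p v =
   f (pt v.1 (v.2 + 1)) * Z (pt v.1 (v.2 + 1)) v +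
   f (pt v.1 (v.2 + N - 1)) * Z (pt v.1 (v.2 + N - 1)) v)%R.
Proof.
move=> hv ho.
have o2 : ~~ odd v.2 by move: hv; rewrite /isVar oddD; move: ho; case: (odd _); case: (odd _).
have lv := ltn_ord v.2.
have c1 : isCZ (pt v.1 (v.2 + 1)) by rewrite isCZ_pt ho oddD /=; move: o2; case: odd.
have c2 : isCZ (pt v.1 (v.2 + N - 1)).
  rewrite isCZ_pt ho /=; have : odd (v.2 + N - 1) = ~~ odd v.2 by lia.
  by move->; rewrite o2.
have d : pt v.1 (v.2 + N - 1) != pt v.1 (v.2 + 1).
  apply/negP => /eqP h; have := congr1 (fun p => nat_of_ord p.2) h => /=.
  rewrite !(modN2 n2); try lia. by case: ifP; case: ifP; lia.
rewrite (bigD1 (pt v.1 (v.2 + 1))) // (bigD1 (pt v.1 (v.2 + N - 1))) /=; last first.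
  by rewrite c2 d.
rewrite big1 ?GRing.addr0 // => p /andP[/andP[hp h1] h2].
rewrite Z0 ?GRing.mulr0 //.
rewrite (adjC n2) adjE; apply/negP; case/or4P => /eqP e.
- by move: hp; rewrite e isCZ_pt; move: ho; rewrite oddD; case: odd.
- move: hp; rewrite e isCZ_pt; have -> : odd (v.1 + N - 1) = ~~ odd v.1 by lia.
  by rewrite ho.
- by rewrite e eqxx in h1.
- by rewrite e eqxx in h2.
Qed.

Lemma adjP_o (p v : pos n) : isVar v -> odd v.1 -> isCZ p -> adj p v -> (p.2 : nat) = v.2.
Proof.
move=> hv ho hp; rewrite (adjC n2 p v) adjE; case/or4P => /eqP e.
- by rewrite e /= modn_small.
- by rewrite e /= modn_small.
- by move: hp; rewrite e isCZ_pt ho.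
- by move: hp; rewrite e isCZ_pt ho.
Qed.

Lemma adjP_e (p v : pos n) : isVar v -> ~~ odd v.1 -> isCZ p -> adj p v -> (p.1 : nat) = v.1.
Proof.
move=> hv ho hp; rewrite (adjC n2 p v) adjE; case/or4P => /eqP e.
- by move: hp; rewrite e isCZ_pt; move: ho; rewrite oddD; case: odd.
- move: hp; rewrite e isCZ_pt; have -> : odd (v.1 + N - 1) = ~~ odd v.1 by lia.
  by rewrite ho.
- by rewrite e /= modn_small.
- by rewrite e /= modn_small.
Qed.

Lemma rep a j : a < N -> j < N -> odd a = odd j ->
  exists2 k, k < n & j = (a + k.*2) %% N.
Proof.
move=> ha hj hp.
case: (leqP a j) => h.
  exists ((j - a)./2); first lia.
  have -> : a + (j - a)./2.*2 = j by lia.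
  by rewrite modn_small.
exists ((j + N - a)./2); first lia.
have -> : a + (j + N - a)./2.*2 = j + N by lia.
by rewrite modnDr modn_small.
Qed.

Variables j0 i0 : nat.
Hypothesis oj0 : odd j0.
Hypothesis lj0 : j0 < N.
Hypothesis hy0 : forall v, isVar v -> odd v.1 -> (v.2 : nat) = j0 -> y v = 0%R.
Hypothesis oi0 : ~~ odd i0.
Hypothesis li0 : i0 < N.
Hypothesis hyi : forall v, isVar v -> ~~ odd v.1 -> (v.1 : nat) = i0 -> y v = 0%R.

Fixpoint lamf (i k : nat) : F :=
  if k is k'.+1 then
    ((y (pt i (j0 + k'.*2 + 1)) - lamf i k' * Z (pt i (j0 + k'.*2)) (pt i (j0 + k'.*2 + 1)))
      / Z (pt i (j0 + k'.*2 + 2)) (pt i (j0 + k'.*2 + 1)))%R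
  else 0%R.

Definition lam (p : pos n) : F := lamf p.1 (((p.2 + N - j0) %% N)./2).

Lemma lam_pt i k : k < n -> lam (pt i (j0 + k.*2)) = lamf (i %% N) k.
Proof.
move=> hk; rewrite /lam /=; congr lamf.
rewrite [(j0 + k.*2) %% N](modN2 n2); last by lia.
case: ifP => h.
  have -> : j0 + k.*2 + N - j0 = k.*2 + N by lia.
  by rewrite modnDr modn_small ?doubleK; lia.
have -> : j0 + k.*2 - N + N - j0 = k.*2 by lia.
by rewrite modn_small ?doubleK; lia.
Qed.

Lemma lam0 (p : pos n) : (p.2 : nat) = j0 -> lam p = 0%R.
Proof. by move=> e; rewrite /lam e addKn modnn. Qed.

Lemma lamf_i0 k : lamf i0 k = 0%R.
Proof.
elim: k => [//|k IH] /=.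
rewrite IH GRing.mul0r GRing.subr0 hyi ?GRing.mul0r //.
- by rewrite isVar_pt; lia.
- by rewrite /= odd_md.
- by rewrite /= modn_small.
Qed.

Lemma S1k i k : ~~ odd i -> k.+1 < n -> Rs lam (pt i (j0 + k.*2 + 1)) = 0%R.
Proof.
move=> oi hk.
have hv : isVar (pt i (j0 + k.*2 + 1)) by rewrite isVar_pt; lia.
have ov : ~~ odd (pt i (j0 + k.*2 + 1)).1 by rewrite /= oddmN.
rewrite /Rs (PSe _ hv ov).
have e1 : pt (pt i (j0 + k.*2 + 1)).1 ((pt i (j0 + k.*2 + 1)).2 + 1) = pt i (j0 + k.*2 + 2).
  by rewrite /= /pt md_mod mdDml; congr pair; apply: md_eq; lia.
have e2 : pt (pt i (j0 + k.*2 + 1)).1 ((pt i (j0 + k.*2 + 1)).2 + N - 1) = pt i (j0 + k.*2).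
  by rewrite /= /pt md_mod mdNm1; [congr pair; apply: md_eq; lia | lia].
rewrite e1 e2.
have L1 : lam (pt i (j0 + k.*2 + 2)) = lamf (i %% N) k.+1.
  have -> : (j0 + k.*2 + 2 = j0 + k.+1.*2)%N by lia.
  exact: lam_pt.
rewrite L1 lam_pt; last lia.
rewrite [lamf _ k.+1]/= !ptml.
have Z2 : Z (pt i (j0 + k.*2 + 2)) (pt i (j0 + k.*2 + 1)) != 0%R.
  rewrite labZ //; last by rewrite isCZ_pt; lia.
  rewrite (adjC n2); have -> : (j0 + k.*2 + 2 = j0 + k.*2 + 1 + 1)%N by lia. exact: adj_up.
by rewrite GRing.divfK // GRing.subrK GRing.subrr.
Qed.

Lemma S2 (e : pos n) : isVar e -> odd e.1 -> (e.2 : nat) = j0 -> Rs lam e = 0%R.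
Proof.
move=> hv ho h2; rewrite /Rs hy0 // GRing.subr0; apply: big1 => p hp.
case: (boolP (adj p e)) => a.
  by rewrite lam0 ?GRing.mul0r // (adjP_o hv ho hp a).
by rewrite Z0 ?GRing.mulr0.
Qed.

Lemma S3k k : k < n -> forall i, odd i -> Rs lam (pt i (j0 + k.*2)) = 0%R.
Proof.
elim: k => [|k IH] hk i oi.
  apply: S2.
  - by rewrite isVar_pt; lia.
  - by rewrite /= oddmN.
  - by rewrite /= addn0 modn_small.
apply: (@ZP lam (pt i (j0 + k.*2 + 1))).
- by rewrite isCX_pt; lia.
- by rewrite isVar_pt; lia.
- have -> : (j0 + k.+1.*2 = j0 + k.*2 + 1 + 1)%N by lia.
  exact: adj_up.
move=> v hv; rewrite adjE /=; case/or4P => /eqP -> hne.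
- have -> : pt (i %% N + 1) ((j0 + k.*2 + 1) %% N) = pt (i + 1) (j0 + k.*2 + 1).
    by rewrite /pt mdDml md_mod.
  apply: S1k => //; lia.
- have -> : pt (i %% N + N - 1) ((j0 + k.*2 + 1) %% N) = pt (i - 1) (j0 + k.*2 + 1).
    by rewrite /pt mdNm1 ?md_mod //; lia.
  apply: S1k => //; lia.
- exfalso; move: hne; apply/negP; rewrite negbK /pt md_mod mdDml.
  by apply/eqP; congr pair; apply: md_eq; lia.
- have -> : pt (i %% N) ((j0 + k.*2 + 1) %% N + N - 1) = pt i (j0 + k.*2).
    by rewrite /pt mdNm1 ?md_mod //; [congr pair; apply: md_eq; lia | lia].
  by apply: IH => //; lia.
Qed.

Lemma S3 (e : pos n) : isVar e -> odd e.1 -> Rs lam e = 0%R.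
Proof.
move=> hv ho.
have o2 : odd e.2 by move: hv ho; rewrite /isVar; lia.
have [k hk ek] := rep lj0 (ltn_ord e.2) (etrans oj0 (esym o2)).
have E : e = pt e.1 (j0 + k.*2).
  by rewrite -[e in LHS](pt_val n2) /pt ek md_mod.
by rewrite E; apply: S3k.
Qed.

Lemma S4k k : k < n -> Rs lam (pt (i0 + k.*2) (j0 + N - 1)) = 0%R.
Proof.
elim: k => [|k IH] hk.
  have hv : isVar (pt (i0 + 0.*2) (j0 + N - 1)) by rewrite isVar_pt; lia.
  have he : ~~ odd (pt (i0 + 0.*2) (j0 + N - 1)).1 by rewrite /= oddmN; lia.
  rewrite /Rs hyi //; last by rewrite /= addn0 modn_small.
  rewrite GRing.subr0; apply: big1 => p hp.
  case: (boolP (adj p (pt (i0 + 0.*2) (j0 + N - 1)))) => a.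
    by rewrite /lam (adjP_e hv he hp a) /= addn0 modn_small // lamf_i0 GRing.mul0r.
  by rewrite Z0 ?GRing.mulr0.
apply: (@ZP lam (pt (i0 + k.*2 + 1) (j0 + N - 1))).
- by rewrite isCX_pt; lia.
- by rewrite isVar_pt; lia.
- have -> : (i0 + k.+1.*2 = i0 + k.*2 + 1 + 1)%N by lia.
  exact: adj_right.
move=> v hv; rewrite adjE /=; case/or4P => /eqP -> hne.
- exfalso; move: hne; apply/negP; rewrite negbK /pt md_mod mdDml.
  by apply/eqP; congr pair; apply: md_eq; lia.
- have -> : pt ((i0 + k.*2 + 1) %% N + N - 1) ((j0 + N - 1) %% N) = pt (i0 + k.*2) (j0 + N - 1).
    by rewrite /pt mdNm1 ?md_mod //; [congr pair; apply: md_eq; lia | lia].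
  by apply: IH; lia.
- rewrite /pt mdDml !md_mod -/(pt _ _).
  apply: S3; [rewrite isVar_pt; lia | rewrite /= !oddmN; lia].
- rewrite /pt mdNm1 ?md_mod -/(pt _ _); last lia.
  apply: S3; [rewrite isVar_pt; lia | rewrite /= !oddmN; lia].
Qed.

Lemma S4 (e : pos n) : isVar e -> ~~ odd e.1 -> (e.2 : nat) = (j0 + N - 1) %% N ->
  Rs lam e = 0%R.
Proof.
move=> hv ho h2.
have [k hk ek] := rep li0 (ltn_ord e.1) (etrans (negbTE oi0) (esym (negbTE ho))).
have E : e = pt (i0 + k.*2) (j0 + N - 1).
  by rewrite -[e in LHS](pt_val n2) /pt ek h2 !md_mod.
by rewrite E; apply: S4k.
Qed.

Lemma S1_aux1 (e : pos n) : isVar e -> ~~ odd e.1 ->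
  exists2 k, k < n & (e.2 : nat) = (j0 + 1 + k.*2) %% N.
Proof.
move=> hv ho.
have o2 : ~~ odd e.2 by move: hv ho; rewrite /isVar; lia.
have la : (j0 + 1) %% N < N by rewrite ltn_pmod //; lia.
have pa : odd ((j0 + 1) %% N) = odd e.2 by rewrite oddmN; lia.
have [k hk ek] := rep la (ltn_ord e.2) pa.
by exists k; rewrite // ek modnDml.
Qed.

Lemma S1_aux2 k : (j0 + 1 + k.*2) %% N != (j0 + N - 1) %% N -> k < n -> k.+1 < n.
Proof.
move=> h hk; case: (ltnP k.+1 n) => // hk'.
have e : (j0 + 1 + k.*2 = j0 + N - 1)%N by lia.
by rewrite e eqxx in h.
Qed.

Lemma S1_aux3 (e : pos n) k : (e.2 : nat) = (j0 + 1 + k.*2) %% N ->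
  e = pt e.1 (j0 + k.*2 + 1).
Proof.
move=> ek.
rewrite -[e in LHS](pt_val n2) /pt ek md_mod; congr pair; apply: md_eq; lia.
Qed.

Lemma S1 (e : pos n) : isVar e -> ~~ odd e.1 -> (e.2 : nat) != (j0 + N - 1) %% N ->
  Rs lam e = 0%R.
Proof.
move=> hv ho h2.
have [k hk ek] := S1_aux1 hv ho.
have hk' : k.+1 < n by apply: S1_aux2 => //; rewrite -ek.
by rewrite (S1_aux3 ek); apply: S1k.
Qed.

Lemma core_main v : isVar v -> (\sum_(p | isCZ p) lam p * Z p v)%R = y v.
Proof.
move=> hv; apply/eqP; rewrite -GRing.subr_eq0; apply/eqP.
case: (boolP (odd v.1)) => ho; first exact: S3.
case: (boolP ((v.2 : nat) == (j0 + N - 1) %% N)) => h.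
  by apply: S4 => //; exact/eqP.
exact: S1.
Qed.

End Core.

Lemma pigeon (T : finType) n (S : {set T}) (g : T -> 'I_n) :
  #|S| < n -> exists k : 'I_n, forall v, v \in S -> g v != k.
Proof.
move=> hS.
case: (boolP [exists k : 'I_n, [forall v in S, g v != k]]).
  move/existsP => [k /forallP hk]; exists k => v vS.
  by have := hk v; rewrite vS.
move=> H; exfalso.
have sub : [set: 'I_n] \subset g @: S.
  apply/subsetP => k _.
  case: (boolP [exists v in S, g v == k]) => [/existsP [v /andP [vS /eqP <-]] | Hn].
    exact: imset_f.
  move: H; rewrite negb_exists => /forallP /(_ k); rewrite negb_forall.
  move=> /existsP [v]; rewrite negb_imply negbK => /andP [vS e].
  by move: Hn; rewrite negb_exists_in => /forall_inP /(_ v vS); rewrite e.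
have := subset_leq_card sub; rewrite cardsT card_ord => h.
have := leq_trans h (leq_imset_card g S); lia.
Qed.

Lemma half_lt n (a : 'I_(2 * n)) : a./2 < n.
Proof. have := ltn_ord a; lia. Qed.

Lemma core_exists n (n2 : 1 < n) (F : fieldType) (X Z : pos n -> pos n -> F) (y : pos n -> F) :
  (forall c v, isCX c -> isVar v -> (X c v != 0)%R = adj c v) ->
  (forall p v, isCZ p -> isVar v -> (Z p v != 0)%R = adj p v) ->
  (forall c p, isCX c -> isCZ p -> (\sum_(v | isVar v) X c v * Z p v = 0)%R) ->
  (forall c, isCX c -> (\sum_(v | isVar v) X c v * y v = 0)%R) ->
  #|[pred v : pos n | isVar v && (y v != 0)%R]| < n ->
  exists lam : pos n -> F, forall v, isVar v -> (\sum_(p | isCZ p) lam p * Z p v)%R = y v.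
Proof.
move=> labX labZ orth cyc hw.
have s1 : [set v : pos n | isVar v && (y v != 0)%R && odd v.1] \subset
    [pred v : pos n | isVar v && (y v != 0)%R].
  by apply/subsetP => u; rewrite !inE /= => /andP[/andP[-> ->]].
have s2 : [set v : pos n | isVar v && (y v != 0)%R && ~~ odd v.1] \subset
    [pred v : pos n | isVar v && (y v != 0)%R].
  by apply/subsetP => u; rewrite !inE /= => /andP[/andP[-> ->]].
have [k hk] := @pigeon _ n _ (fun v => Ordinal (half_lt v.2)) (leq_ltn_trans (subset_leq_card s1) hw).
have [k' hk'] := @pigeon _ n _ (fun v => Ordinal (half_lt v.1)) (leq_ltn_trans (subset_leq_card s2) hw).
eexists => v hv.
apply: (@core_main n n2 F X Z y labX labZ orth cyc (k.*2.+1) (k'.*2)).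
- lia.
- have := ltn_ord k; lia.
- move=> u hu ho e; apply/eqP; apply/negP => /negP nz.
  have := hk u; rewrite inE hu nz ho => /(_ isT); apply/negP; rewrite negbK.
  by apply/eqP; apply: val_inj; rewrite /= e; lia.
- lia.
- have := ltn_ord k'; lia.
- move=> u hu ho e; apply/eqP; apply/negP => /negP nz.
  have := hk' u; rewrite inE hu nz ho => /(_ isT); apply/negP; rewrite negbK.
  by apply/eqP; apply: val_inj; rewrite /= e; lia.
- exact: hv.
Qed.

Section Wrap.
Variable n : nat.
Hypothesis n2 : 1 < n.
Variable F : fieldType.

Definition liftf (P Q : pred (pos n)) (H : {x | P x} -> {x | Q x} -> F) (c v : pos n) : F :=
  match (insub c : option {x | P x}), (insub v : option {x | Q x}) with
  | Some c', Some v' => H c' v'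
  | _, _ => 0%R
  end.

Definition lift1 (Q : pred (pos n)) (y : {x | Q x} -> F) (v : pos n) : F :=
  if (insub v : option {x | Q x}) is Some v' then y v' else 0%R.

Lemma liftfS (P Q : pred (pos n)) (H : {x | P x} -> {x | Q x} -> F) c v (hc : P c) (hv : Q v) :
  liftf H c v = H (Sub c hc) (Sub v hv).
Proof. by rewrite /liftf (insubT P hc) (insubT Q hv). Qed.

Lemma liftfV (P Q : pred (pos n)) (H : {x | P x} -> {x | Q x} -> F) c (hc : P c) (v : {x | Q x}) :
  liftf H c (val v) = H (Sub c hc) v.
Proof. by rewrite /liftf (insubT P hc) valK. Qed.

Lemma liftfVV (P Q : pred (pos n)) (H : {x | P x} -> {x | Q x} -> F) (c : {x | P x}) (v : {x | Q x}) :
  liftf H (val c) (val v) = H c v.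
Proof. by rewrite /liftf !valK. Qed.

Lemma lift1V (Q : pred (pos n)) (y : {x | Q x} -> F) (v : {x | Q x}) : lift1 y (val v) = y v.
Proof. by rewrite /lift1 valK. Qed.

Lemma lift1S (Q : pred (pos n)) (y : {x | Q x} -> F) v (hv : Q v) : lift1 y v = y (Sub v hv).
Proof. by rewrite /lift1 (insubT Q hv). Qed.

Lemma sum_sig (P : pred (pos n)) (f : pos n -> F) :
  (\sum_(x : {x | P x}) f (val x) = \sum_(x | P x) f x)%R.
Proof.
rewrite (reindex_omap (val : {x | P x} -> pos n) insub); last first.
  by move=> i Pi; rewrite (insubT P Pi).
by apply: eq_bigl => x; rewrite valP valK eqxx.
Qed.

Lemma wrap (σ : pos n -> pos n) (PV PP : pred (pos n))
  (σinv : involutive σ) (σV : forall v, isVar (σ v) = isVar v)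
  (σC : forall c, PV (σ c) = isCX c) (σP : forall p, PP (σ p) = isCZ p)
  (σA : forall c v, adj (σ c) (σ v) = adj c v)
  (H1 : {x | PV x} -> VN n -> F) (H2 : {x | PP x} -> VN n -> F) :
  labeling H1 -> labeling H2 -> (forall c p, \sum_v H1 c v * H2 p v = 0)%R ->
  forall y : VN n -> F, in_code H1 y -> wt y < n ->
  exists lam : {x | PP x} -> F, forall v, y v = (\sum_p lam p * H2 p v)%R.
Proof.
move=> l1 l2 orth y cy hw.
have σi := inv_inj σinv.
have σC' : forall c, isCX c -> PV (σ c) by move=> c; rewrite σC.
have σP' : forall c, isCZ c -> PP (σ c) by move=> c; rewrite σP.
have σV' : forall c, isVar c -> isVar (σ c) by move=> c; rewrite σV.
pose X c v := liftf H1 (σ c) (σ v).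
pose Z p v := liftf H2 (σ p) (σ v).
pose y' v := lift1 y (σ v).
have hX : forall c v, isCX c -> isVar v -> (X c v != 0)%R = adj c v.
  move=> c v hc hv; rewrite /X (liftfS H1 (σC' _ hc) (σV' _ hv)) l1 /= σA //.
have hZ : forall c v, isCZ c -> isVar v -> (Z c v != 0)%R = adj c v.
  move=> c v hc hv; rewrite /Z (liftfS H2 (σP' _ hc) (σV' _ hv)) l2 /= σA //.
have hO : forall c p, isCX c -> isCZ p -> (\sum_(v | isVar v) X c v * Z p v = 0)%R.
  move=> c p hc hp.
  rewrite (reindex_inj σi) /=.
  under eq_bigl => v do rewrite σV.
  rewrite -sum_sig /X /Z.
  under eq_bigr => v _ do rewrite !σinv (liftfV H1 (σC' _ hc)) (liftfV H2 (σP' _ hp)).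
  exact: orth.
have hc' : forall c, isCX c -> (\sum_(v | isVar v) X c v * y' v = 0)%R.
  move=> c hc.
  rewrite (reindex_inj σi) /=.
  under eq_bigl => v do rewrite σV.
  rewrite -sum_sig /X /y'.
  under eq_bigr => v _ do rewrite !σinv (liftfV H1 (σC' _ hc)) lift1V.
  exact: cy.
have hw' : #|[pred v : pos n | isVar v && (y' v != 0)%R]| < n.
  apply: (leq_ltn_trans _ hw).
  apply: leq_trans (leq_imset_card (fun v => σ (val v)) [pred v | y v != 0%R]).
  apply: subset_leq_card; apply/subsetP => v; rewrite inE /= => /andP [hv nz].
  apply/imsetP; exists (Sub (σ v) (σV' _ hv)); last by rewrite SubK σinv.
  by move: nz; rewrite /y' (lift1S y (σV' _ hv)).
have [lam hl] := @core_exists n n2 F X Z y' hX hZ hO hc' hw'.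
exists (fun p => lam (σ (val p))) => v.
have hv : isVar (σ (val v)) by rewrite σV (valP v).
have := hl _ hv; rewrite /y' σinv lift1V => <-.
rewrite (reindex_inj σi) /=.
under eq_bigl => p do rewrite -σP σinv.
rewrite -sum_sig /Z.
by apply: eq_bigr => p _; rewrite !σinv liftfVV.
Qed.

End Wrap.

Section Bin.
Local Open Scope ring_scope.
Variable F : finFieldType.
Variable m : nat.
Hypothesis m1 : (0 < m)%N.
Hypothesis cardF : #|F| = (2 ^ m)%N.
Variable M : F -> 'M['F_2]_m.
Hypothesis MD : forall a b, M (a + b) = M a + M b.
Hypothesis MM : forall a b, M (a * b) = M a *m M b.
Hypothesis M1 : M 1 = 1%:M.

Definition u0 : 'cV['F_2]_m := \col_i (nat_of_ord i == 0%N)%:R.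
Definition th (a : F) : 'cV['F_2]_m := M a *m u0.

Lemma M0 : M 0 = 0.
Proof.
by apply: (addrI (M 0)); rewrite -MD !addr0.
Qed.

Lemma thD a b : th (a + b) = th a + th b.
Proof. by rewrite /th MD mulmxDl. Qed.
Lemma th0 : th 0 = 0.
Proof. by rewrite /th M0 mul0mx. Qed.
Lemma thM a b : th (a * b) = M a *m th b.
Proof. by rewrite /th MM mulmxA. Qed.
Lemma thN a : th (- a) = - th a.
Proof. by apply/eqP; rewrite -subr_eq0 opprK -thD addNr th0. Qed.

Lemma u0_neq0 : u0 != 0.
Proof.
apply/negP => /eqP /matrixP /(_ (Ordinal m1) 0); rewrite !mxE /=.
by move/eqP; rewrite oner_eq0.
Qed.

Lemma th_inj : injective th.
Proof.
move=> a b e; apply/eqP; rewrite -subr_eq0; apply/negPn/negP => nz.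
have : th (a - b) = 0 by rewrite thD thN e subrr.
move/(congr1 (mulmx (M (a - b)^-1))); rewrite -thM mulVf // /th M1 mul1mx mulmx0.
by move/eqP; rewrite (negbTE u0_neq0).
Qed.

Lemma th_bij : bijective th.
Proof.
apply: (@inj_card_bij F _ th th_inj).
by rewrite card_mx card_Fp // cardF muln1.
Qed.

Definition ps (u : 'cV['F_2]_m) : F := odflt 0 [pick a | th a == u].

Lemma psK : cancel ps th.
Proof.
move=> u; rewrite /ps; case: pickP => [a /eqP //|/= H].
have [g _ gK] := th_bij.
by have := H (g u); rewrite gK eqxx.
Qed.
Lemma thK : cancel th ps.
Proof. by move=> a; apply: th_inj; rewrite psK. Qed.

Lemma psD u v : ps (u + v) = ps u + ps v.
Proof. by apply: th_inj; rewrite thD !psK. Qed.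
Lemma ps0 : ps 0 = 0.
Proof. by apply: th_inj; rewrite th0 psK. Qed.
Lemma psM a u : ps (M a *m u) = a * ps u.
Proof. by apply: th_inj; rewrite thM !psK. Qed.

Lemma Lbin (V C1 C2 : finType) (P : C1 -> V -> F) (Q : C2 -> V -> F) (n : nat) :
  (forall y : V -> F, in_code P y -> (wt y < n)%N ->
     exists lam : C2 -> F, forall v, y v = \sum_z lam z * Q z v) ->
  forall x : V * 'I_m -> 'F_2,
  (forall cr : C1 * 'I_m, \sum_(vs : V * 'I_m) M (P cr.1 vs.1) cr.2 vs.2 * x vs = 0) ->
  (wt x < n)%N ->
  exists w : C2 -> 'I_m -> 'F_2, forall v s, x (v, s) = \sum_z \sum_r M (Q z v) s r * w z r.
Proof.
move=> core x hx hw.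
pose xc v : 'cV['F_2]_m := \col_s x (v, s).
pose y v := ps (xc v).
have hy : in_code P y.
  move=> c; rewrite /y.
  under eq_bigr => v _ do rewrite -psM.
  rewrite -(big_morph ps psD ps0).
  suff -> : \sum_v M (P c v) *m xc v = 0 by rewrite ps0.
  apply/matrixP => r j; rewrite summxE mxE.
  under eq_bigr => v _ do rewrite mxE.
  under eq_bigr => v _ do under eq_bigr => s _ do rewrite mxE.
  by rewrite pair_bigA /= -[RHS](hx (c, r)); apply: eq_bigr => -[v s] _.
have hwy : (wt y < n)%N.
  apply: (leq_ltn_trans _ hw); rewrite /wt.
  apply: leq_trans (leq_imset_card fst _).
  apply: subset_leq_card; apply/subsetP => v; rewrite inE /= => nz.
  case: (boolP [exists s, x (v, s) != 0]) => [/existsP [s hs]|].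
    by apply/imsetP; exists (v, s).
  rewrite negb_exists => /forallP H; exfalso; move: nz; rewrite /y.
  have -> : xc v = 0.
    by apply/matrixP => s j; rewrite !mxE; apply/eqP; have := H s; rewrite negbK.
  by rewrite ps0 eqxx.
have [lam hl] := core y hy hwy.
exists (fun z r => th (lam z) r 0) => v s.
have e : xc v = th (y v) by rewrite /y psK.
have := congr1 (fun u : 'cV_m => u s 0) e; rewrite /= mxE => ->.
rewrite hl (big_morph th thD th0) summxE.
by apply: eq_bigr => z _; rewrite mulrC thM mxE.
Qed.

End Bin.

Definition sw n (p : pos n) : pos n := (p.2, p.1).
Lemma sw_inv n : involutive (@sw n). Proof. by case. Qed.
Lemma isVar_sw n (v : pos n) : isVar (sw v) = isVar v.
Proof. by rewrite /isVar /= addnC. Qed.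
Lemma isCZ_sw n (v : pos n) : isCZ (sw v) = isCX v.
Proof. by rewrite /isCZ /isCX /= andbC. Qed.
Lemma isCX_sw n (v : pos n) : isCX (sw v) = isCZ v.
Proof. by rewrite /isCZ /isCX /= andbC. Qed.
Lemma adj_sw n (c v : pos n) : adj (sw c) (sw v) = adj c v.
Proof.
rewrite /adj /=.
by case: ((v.1 : nat) == _); case: ((v.2 : nat) == _); case: ((v.1 : nat) == _);
   case: ((v.2 : nat) == _); case: ((v.1 : nat) == _); case: ((v.2 : nat) == _).
Qed.

Section Basis.
Local Open Scope ring_scope.
Variable F : finFieldType.
Variable m : nat.
Variables (b : 'I_m -> F) (A : F -> 'M['F_2]_m).
Hypothesis cardF : #|F| = (2 ^ m)%N.
Hypothesis m1 : (0 < m)%N.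
Hypothesis basis : is_F2_basis b.
Hypothesis mm : mult_matrix b A.

Lemma two0 : (2%:R : F) = 0.
Proof. exact: pcharf0 (card_finPcharP cardF isT). Qed.

Lemma f2D (a c : 'F_2) : f2 F (a + c) = f2 F a + f2 F c.
Proof.
case: a => [[|[|k]] ha]; case: c => [[|[|l]] hc] //; rewrite /f2 /= ?add0r ?addr0 //.
by rewrite -natrD two0.
Qed.

Lemma f2M (a c : 'F_2) : f2 F (a * c) = f2 F a * f2 F c.
Proof.
by case: a => [[|[|k]] ha]; case: c => [[|[|l]] hc] //; rewrite /f2 /= ?mul0r ?mulr0 ?mulr1.
Qed.

Lemma f20 : f2 F 0 = 0. Proof. by []. Qed.
Lemma f21 : f2 F 1 = 1. Proof. by []. Qed.

Lemma f2_sum (I : finType) (g : I -> 'F_2) : f2 F (\sum_i g i) = \sum_i f2 F (g i).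
Proof. exact: (big_morph _ f2D f20). Qed.

Lemma coord_inj (l1 l2 : 'I_m -> 'F_2) :
  \sum_i f2 F (l1 i) * b i = \sum_i f2 F (l2 i) * b i -> l1 =1 l2.
Proof.
move=> e i.
have H : [ffun i => l1 i] = [ffun i => l2 i] :> {ffun 'I_m -> 'F_2}.
  apply: (bij_inj basis) => /=.
  under eq_bigr do rewrite ffunE.
  by under [RHS]eq_bigr do rewrite ffunE.
by have := congr1 (fun f : {ffun 'I_m -> 'F_2} => f i) H; rewrite !ffunE.
Qed.

Lemma AD a c : A (a + c) = A a + A c.
Proof.
apply/matrixP => i j.
apply: (@coord_inj (fun i => A (a + c) i j) (fun i => (A a + A c) i j)).
rewrite -mm mulrDl !mm -big_split; apply: eq_bigr => k _.
by rewrite mxE f2D mulrDl.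
Qed.

Lemma AM a c : A (a * c) = A a *m A c.
Proof.
apply/matrixP => i j.
apply: (@coord_inj (fun i => A (a * c) i j) (fun i => (A a *m A c) i j)).
rewrite -mm -mulrA mm mulr_sumr.
under eq_bigr => k _ do rewrite mulrCA mm mulr_sumr.
rewrite exchange_big; apply: eq_bigr => k _.
rewrite mxE f2_sum mulr_suml; apply: eq_bigr => l _.
by rewrite f2M mulrA [f2 F (A c _ _) * _]mulrC.
Qed.

Lemma A1 : A 1 = 1%:M.
Proof.
apply/matrixP => i j.
apply: (@coord_inj (fun i => A 1 i j) (fun i => (1%:M : 'M['F_2]_m) i j)).
rewrite -mm mul1r (bigD1 j) //= mxE eqxx f21 mul1r big1 ?addr0 // => k hk.
by rewrite mxE (negbTE hk) mul0r.
Qed.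

Lemma ATD a c : (A (a + c))^T = (A a)^T + (A c)^T.
Proof. by rewrite AD; apply/matrixP => i j; rewrite !mxE. Qed.
Lemma ATM a c : (A (a * c))^T = (A a)^T *m (A c)^T.
Proof. by rewrite mulrC AM trmx_mul. Qed.
Lemma AT1 : (A 1)^T = 1%:M.
Proof. by rewrite A1 trmx1. Qed.

End Basis.

Local Open Scope ring_scope.

Theorem theorem2 (n m : nat) (F : finFieldType) (b : 'I_m -> F) (A : F -> 'M['F_2]_m)
    (HX : CX n -> VN n -> F) (HZ : CZ n -> VN n -> F) :
  (2 <= n)%N -> (1 <= m)%N -> #|F| = (2 ^ m)%N ->
  is_F2_basis b -> mult_matrix b A ->
  labeling HX -> labeling HZ ->
  cycles_product_one HX ->
  (forall y, dual (in_code HZ) y -> in_code HX y) ->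
  (forall x, in_code (extX A HX) x -> ~ dual (in_code (extZ A HZ)) x -> (n <= wt x)%N) /\
  (forall x, in_code (extZ A HZ) x -> ~ dual (in_code (extX A HX)) x -> (n <= wt x)%N).
Proof.
move=> n2 m1 cardF basis mm lX lZ _ hdual.
have ADx := AD cardF basis mm.
have AMx := AM cardF basis mm.
have A1x := A1 basis mm.
have ATDx := ATD cardF basis mm.
have ATMx := ATM cardF basis mm.
have AT1x := AT1 basis mm.
have orthXZ : forall c p, \sum_v HX c v * HZ p v = 0.
  move=> c p.
  suff H : dual (in_code HZ) (HZ p) by exact: (hdual _ H c).
  move=> x hx; rewrite -[RHS](hx p); apply: eq_bigr => v _; exact: mulrC.
split.
- move=> x hx hnd; rewrite leqNgt; apply/negP => hlt; apply: hnd.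
  have core : forall y : VN n -> F, in_code HX y -> (wt y < n)%N ->
      exists lam : CZ n -> F, forall v, y v = \sum_p lam p * HZ p v.
    move=> y hy hw.
    exact: (@wrap n n2 F id (@isCX n) (@isCZ n) (fun x => erefl) (fun v => erefl)
      (fun v => erefl) (fun v => erefl) (fun c v => erefl) HX HZ lX lZ orthXZ y hy hw).
  have [w hw] := Lbin m1 cardF ADx AMx A1x core (fun cr => hx cr) hlt.
  move=> z hz.
  rewrite (eq_bigr (fun vs => \sum_c \sum_r w c r * (A (HZ c vs.1) vs.2 r * z vs))); last first.
    move=> [v s] _; rewrite hw mulr_sumr; apply: eq_bigr => c _.
    rewrite mulr_sumr; apply: eq_bigr => r _.
    by rewrite [z _ * _]mulrC -mulrA mulrCA.
  rewrite exchange_big; apply: big1 => c _; rewrite exchange_big; apply: big1 => r _.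
  rewrite -mulr_sumr; have := hz (c, r); rewrite /extZ /= => ->; by rewrite mulr0.
- move=> x hx hnd; rewrite leqNgt; apply/negP => hlt; apply: hnd.
  have core : forall y : VN n -> F, in_code HZ y -> (wt y < n)%N ->
      exists lam : CX n -> F, forall v, y v = \sum_p lam p * HX p v.
    move=> y hy hw.
    apply: (@wrap n n2 F (@sw n) (@isCZ n) (@isCX n) (@sw_inv n) (@isVar_sw n)
      (@isCZ_sw n) (@isCX_sw n) (@adj_sw n) HZ HX lZ lX _ y hy hw).
    move=> c p; rewrite -[RHS](orthXZ p c); apply: eq_bigr => v _; exact: mulrC.
  have hx' : forall cr : CZ n * 'I_m,
      \sum_(vs : VN n * 'I_m) (A (HZ cr.1 vs.1))^T cr.2 vs.2 * x vs = 0.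
    move=> cr; rewrite -[RHS](hx cr); apply: eq_bigr => vs _; by rewrite mxE.
  have [w hw] := Lbin m1 cardF ATDx ATMx AT1x core hx' hlt.
  move=> z hz.
  rewrite (eq_bigr (fun vs => \sum_c \sum_r w c r * (A (HX c vs.1) r vs.2 * z vs))); last first.
    move=> [v s] _; rewrite hw mulr_sumr; apply: eq_bigr => c _.
    rewrite mulr_sumr; apply: eq_bigr => r _.
    by rewrite mxE [z _ * _]mulrC -mulrA mulrCA.
  rewrite exchange_big; apply: big1 => c _; rewrite exchange_big; apply: big1 => r _.
  rewrite -mulr_sumr; have := hz (c, r); rewrite /extX /= => ->; by rewrite mulr0.
Qed.
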